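(* Let $A=B[x;\alpha,\delta]_p$ be a Poisson polynomial algebra over a field $k$ of characteristic zero, and assume $\alpha\delta=\delta(\alpha+s)$ for some $s\in k$. Then for all $a,b\in B$ and $n\ge0$, $$\delta^n(\{a,b\})=\sum_{l+m=n}\binom{n}{l}\Big(\{\delta^l(a),\delta^m(b)\}+m\,\delta^l\alpha(a)\,\delta^m(b)-l\,\delta^l(a)\,\delta^m\alpha(b)\Big).$$
   Context: If $B$ is a Poisson algebra, $\alpha$ a Poisson derivation of $B$ and $\delta$ a derivation of $B$ with $\delta(\{a,b\})=\{\delta(a),b\}+\{a,\delta(b)\}+\alpha(a)\delta(b)-\delta(a)\alpha(b)$ for $a,b\in B$, then $B[x;\alpha,\delta]_p$ is $B[x]$ with the unique Poisson bracket extending that of $B$ with $\{x,b\}=\alpha(b)x+\delta(b)$. *)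

(* Defs.v *)
From HB Require Import structures.
From mathcomp Require Import all_boot all_order all_algebra.
Set Implicit Arguments. Unset Strict Implicit. Unset Printing Implicit Defensive.
Import GRing.Theory.
Local Open Scope ring_scope.

(* A Poisson algebra over k: a commutative k-algebra B with a k-bilinear
   Lie bracket (antisymmetric, Jacobi) that is a derivation in each argument
   (Leibniz rule in the second argument; the first follows by antisymmetry). *)
Definition is_poisson_bracket (k : fieldType) (B : comAlgType k)
    (br : B -> B -> B) : Prop :=
  [/\ (forall (c : k) (a a' b : B), br (c *: a + a') b = c *: br a b + br a' b),
      (forall (c : k) (a b b' : B), br a (c *: b + b') = c *: br a b + br a b'),
      (forall a b : B, br a b = - br b a),
      (forall a b c : B, br a (br b c) + br b (br c a) + br c (br a b) = 0) &
      (forall a b c : B, br a (b * c) = br a b * c + b * br a c)].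

Definition is_derivation (k : fieldType) (B : comAlgType k) (d : B -> B) : Prop :=
  (forall (c : k) (a b : B), d (c *: a + b) = c *: d a + d b) /\
  (forall a b : B, d (a * b) = d a * b + a * d b).

Definition is_poisson_derivation (k : fieldType) (B : comAlgType k)
    (br : B -> B -> B) (d : B -> B) : Prop :=
  is_derivation d /\ (forall a b : B, d (br a b) = br (d a) b + br a (d b)).

(* Hypotheses making B[x; alpha, delta]_p a Poisson polynomial algebra. *)
Definition poisson_poly_data (k : fieldType) (B : comAlgType k)
    (br : B -> B -> B) (alpha delta : B -> B) : Prop :=
  [/\ is_poisson_bracket br, is_poisson_derivation br alpha, is_derivation delta &
      forall a b : B, delta (br a b) =
        br (delta a) b + br a (delta b) + alpha a * delta b - delta a * alpha b].

(* Main.v *)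
Require Import Defs.
From HB Require Import structures.
From mathcomp Require Import all_boot all_order all_algebra.
From mathcomp Require Import ring zify.
Import GRing.Theory.
Local Open Scope ring_scope.

Section Aux.
Variables (k : fieldType) (B : comAlgType k).

Lemma pascal (f : nat -> nat -> B) n :
  \sum_(l < n.+2) 'C(n.+1, l)%:R *: f l (n.+1 - l)%N =
  \sum_(l < n.+1) 'C(n, l)%:R *: (f l.+1 (n - l)%N + f l (n - l)%N.+1).
Proof.
rewrite big_ord_recl /= subn0 bin0.
under eq_bigr => i _ do rewrite /bump /= add1n binS natrD scalerDl subSS.
rewrite big_split /=.
under [in RHS]eq_bigr => i _ do rewrite scalerDr.
rewrite big_split /= addrA [RHS]addrC; congr (_ + _).
rewrite [in RHS]big_ord_recl /= bin0 subn0.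
rewrite [in LHS]big_ord_recr /= bin_small // scale0r addr0.
congr (_ + _); apply: eq_bigr => i _.
rewrite /bump /= add1n (_ : ((n - i.+1).+1 = n - i)%N) //.
have := ltn_ord i; lia.
Qed.

Lemma shiftsum (W : nat -> nat -> B) n :
  \sum_(l < n.+1) 'C(n, l)%:R *: (l%:R *: W l (n - l)%N.+1) =
  \sum_(l < n.+1) 'C(n, l)%:R *: ((n - l)%N%:R *: W l.+1 (n - l)%N).
Proof.
rewrite big_ord_recl /= scale0r scaler0 add0r.
rewrite [in RHS]big_ord_recr /= subnn scale0r scaler0 addr0.
apply: eq_bigr => i _.
rewrite /bump /= add1n !scalerA -!natrM mulnC mul_bin_left mulnC.
have := ltn_ord i => hi.
by rewrite (_ : ((n - i.+1).+1 = n - i)%N) //; lia.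
Qed.

End Aux.

Theorem lemma3p6 (k : fieldType) (B : comAlgType k) (br : B -> B -> B)
    (alpha delta : B -> B) (s : k) :
  [pchar k] =i pred0 ->
  poisson_poly_data br alpha delta ->
  (forall b : B, alpha (delta b) = delta (alpha b + s *: b)) ->
  forall (a b : B) (n : nat),
    iter n delta (br a b) =
    \sum_(l < n.+1)
      'C(n, l)%:R *: (br (iter l delta a) (iter (n - l) delta b)
        + (n - l)%:R *: (iter l delta (alpha a) * iter (n - l) delta b)
        - l%:R *: (iter l delta a * iter (n - l) delta (alpha b))).
Proof.
move=> _ [_ [[aL aM] _] [dL dM] dbr] hAD a b.
have d0 : delta 0 = 0.
  have h := dL 1 0 0; rewrite !scale1r addr0 in h.
  by apply: (@addrI _ (delta 0)); rewrite addr0 -h.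
have dD x y : delta (x + y) = delta x + delta y.
  by move: (dL 1 x y); rewrite !scale1r.
have dZ c x : delta (c *: x) = c *: delta x.
  by move: (dL c x 0); rewrite !addr0 d0 addr0.
have dN x : delta (- x) = - delta x.
  by rewrite -scaleN1r dZ scaleN1r.
have dB x y : delta (x - y) = delta x - delta y by rewrite dD dN.
have dS (I : finType) (F : I -> B) : delta (\sum_i F i) = \sum_i delta (F i).
  apply: (big_morph delta dD d0).
have aD x y : alpha (x + y) = alpha x + alpha y.
  by move: (aL 1 x y); rewrite !scale1r.
have a0 : alpha 0 = 0.
  have h := aL 1 0 0; rewrite !scale1r addr0 in h.
  by apply: (@addrI _ (alpha 0)); rewrite addr0 -h.
have aZ c x : alpha (c *: x) = c *: alpha x.
  by move: (aL c x 0); rewrite !addr0 a0 addr0.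
have hAD' x : alpha (delta x) = delta (alpha x) + s *: delta x.
  by rewrite hAD dD dZ.
have hAl x l : alpha (iter l delta x) =
    iter l delta (alpha x) + (l%:R * s) *: iter l delta x.
  elim: l => [|l IH]; first by rewrite /= mul0r scale0r addr0.
  by rewrite !iterS hAD' IH dD dZ -addrA -scalerDl mulrSr mulrDl mul1r.
set T := fun l m => br (iter l delta a) (iter m delta b).
set U := fun l m => iter l delta (alpha a) * iter m delta b.
set V := fun l m => iter l delta a * iter m delta (alpha b).
set W := fun l m => iter l delta a * iter m delta b.
pose g := fun l m => T l m + m%:R *: U l m - l%:R *: V l m.
have key l m : delta (g l m) = g l.+1 m + g l m.+1 +
    s *: (l%:R *: W l m.+1 - m%:R *: W l.+1 m).
  rewrite /g /T /U /V /W !dB !dD !dZ dbr !dM !hAl -!iterS.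
  rewrite -!scalerA !scaler_nat.
  pose S : B := s%:A.
  have sA x : s *: x = S * x by rewrite /S mulr_algl.
  rewrite !sA; clearbody S.
  ring.
elim=> [|n IH].
  by rewrite big_ord1 /= !scale0r subr0 scale1r addr0.
rewrite iterS IH dS.
have -> : \sum_(l < n.+2) 'C(n.+1, l)%:R *: (br (iter l delta a) (iter (n.+1 - l)%N delta b)
        + (n.+1 - l)%N%:R *: (iter l delta (alpha a) * iter (n.+1 - l)%N delta b)
        - l%:R *: (iter l delta a * iter (n.+1 - l)%N delta (alpha b)))
  = \sum_(l < n.+2) 'C(n.+1, l)%:R *: g l (n.+1 - l)%N by [].
rewrite pascal.
under eq_bigr => i _ do rewrite dZ (key i (n - i)%N).
under eq_bigr => i _ do rewrite scalerDr.
rewrite big_split /=.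
rewrite -[RHS]addr0; congr (_ + _).
under eq_bigr => i _ do rewrite scalerA mulrC -scalerA.
rewrite -scaler_sumr.
under eq_bigr => i _ do rewrite scalerBr.
by rewrite sumrB shiftsum subrr scaler0.
Qed.
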